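(* Let $a\in \mathcal{A}$. Then the following are equivalent: (1) $a$ has a $w$-weighted core inverse. (2) $aw\in \mathcal{A}^{\#}$ and $waw$ has a $((aw)^{D}, ((wa)^{D})^* )$-inverse. In this case, $a^{\mathrm{core},w}=(waw)^{((aw)^{D},((wa)^D)^* )}$.
   Context: $\mathcal{A}$ is a complex Banach *-algebra with identity and $w\in\mathcal{A}$. The $w$-weighted core inverse of $a$ is the unique $x$ with $a(wx)^2=x$, $(wawx)^*=wawx$, $xw(aw)^2=aw$, denoted $a^{\mathrm{core},w}$. $\mathcal{A}^{\#}$ is the set of group invertible elements; $b^D$ denotes the Drazin inverse. For $a,b,c\in\mathcal{A}$, the $(b,c)$-inverse of $a$ is the unique $x$ (if it exists) with $xab=b$, $cax=c$, $x\in b\mathcal{A}x\cap x\mathcal{A}c$, denoted $a^{(b,c)}$. *)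

(* Defs.v *)
From mathcomp Require Import all_boot all_algebra.
Set Implicit Arguments. Unset Strict Implicit. Unset Printing Implicit Defensive.
Import GRing.Theory.
Local Open Scope ring_scope.

(* Ambient structure: a (unital) ring R with an involution [star]
   (additive, anti-multiplicative, involutive).  Every complex Banach
   *-algebra with identity is such a ring. *)
Definition is_involution (R : nzRingType) (star : R -> R) : Prop :=
  [/\ forall x y, star (x + y) = star x + star y,
      forall x y, star (x * y) = star y * star x &
      forall x, star (star x) = x].

Definition is_group_inverse (R : nzRingType) (a x : R) : Prop :=
  [/\ a * x * a = a, x * a * x = x & a * x = x * a].

Definition group_invertible (R : nzRingType) (a : R) : Prop :=
  exists x, is_group_inverse a x.

Definition is_drazin_inverse (R : nzRingType) (a x : R) : Prop :=
  [/\ x * a * x = x, a * x = x * a &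
      exists k : nat, a ^+ k.+1 * x = a ^+ k].

Definition is_bc_inverse (R : nzRingType) (a b c x : R) : Prop :=
  [/\ x * a * b = b, c * a * x = c,
      (exists s, x = b * s * x) & (exists t, x = x * t * c)].

Definition is_wcore_inverse (R : nzRingType) (star : R -> R) (w a x : R)
  : Prop :=
  [/\ a * (w * x) ^+ 2 = x,
      star (w * a * w * x) = w * a * w * x &
      x * w * (a * w) ^+ 2 = a * w].

(* Main.v *)
Require Import Defs.
From mathcomp Require Import all_boot all_algebra.
Import GRing.Theory.
Local Open Scope ring_scope.
Set Implicit Arguments. Unset Strict Implicit.

Section S.
Variable R : nzRingType.
Implicit Types t d e g : R.

Lemma drazin_idx t d k j : t ^+ k.+1 * d = t ^+ k -> t ^+ (j + k).+1 * d = t ^+ (j + k).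
Proof. by move=> H; rewrite -addnS !exprD -mulrA H. Qed.

Lemma idem_pow (p : R) n : p * p = p -> p ^+ n.+1 = p.
Proof. by move=> H; elim: n => [|n IH]; rewrite ?expr1 // exprS IH H. Qed.

Lemma drazin_pp t d e m :
  t ^+ m.+2 * d = t ^+ m.+1 -> t ^+ m.+2 * e = t ^+ m.+1 ->
  d * t * d = d -> t * d = d * t -> t * e = e * t ->
  t * e * (t * d) = t * d /\ t * d * (t * e) = t * d.
Proof.
move=> Hd He h1 h2 h2'.
have pi : t * d * (t * d) = t * d by rewrite -mulrA (mulrA d) h1.
have pe : (t * d) ^+ m.+1 = t * d by apply: idem_pow.
have cd : GRing.comm t d by [].
have cd' : GRing.comm d t by [].
have cp : GRing.comm (t * e) t by rewrite /GRing.comm -mulrA -h2' mulrA.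
split.
  rewrite -[in LHS]pe (exprMn_comm _ cd) mulrA.
  have -> : t * e * t ^+ m.+1 = t ^+ m.+1.
    by rewrite (commrX m.+1 cp) mulrA -exprSr He.
  by rewrite -(exprMn_comm _ cd) pe.
rewrite -[in LHS]pe h2 (exprMn_comm _ cd') -mulrA (mulrA _ t) -exprSr He.
by rewrite -(exprMn_comm _ cd') -h2 pe.
Qed.

Lemma drazin_unique t d e : is_drazin_inverse t d -> is_drazin_inverse t e -> d = e.
Proof.
case=> h1 h2 [k hk] [h1' h2' [k' hk']].
have e1 := drazin_idx k'.+1 hk.
have e2 := drazin_idx k.+1 hk'.
rewrite addnC in e2.
rewrite addSn in e1 e2; rewrite addnS in e2.
have [_ p1] := drazin_pp e1 e2 h1 h2 h2'.
have [p2 _] := drazin_pp e2 e1 h1' h2' h2.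
have pp : t * d = t * e by rewrite -p1 p2.
by rewrite -{1}h1 -mulrA pp mulrA -h2 pp h2' h1'.
Qed.

Lemma bc_unique (a b c y y' : R) : is_bc_inverse a b c y -> is_bc_inverse a b c y' -> y = y'.
Proof.
case=> _ h2 [s hs] _ [h1' _ _ [u hu]].
have E1 : y' * a * y = y by rewrite {1}hs !mulrA h1' -hs.
have E2 : y' * a * y = y' by rewrite {1}hu -!mulrA (mulrA c a) h2 mulrA -hu.
by rewrite -E1 E2.
Qed.

Lemma group_drazin t g : is_group_inverse t g -> is_drazin_inverse t g.
Proof.
case=> h1 h2 h3; split => //; exists 1%N.
by rewrite expr2 -mulrA h3 mulrA h1.
Qed.

Lemma cline (a w g : R) : is_group_inverse (a * w) g -> is_drazin_inverse (w * a) (w * g * g * a).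
Proof.
case=> h1 h2 h3; rewrite !mulrA in h1 h2 h3.
have R1 z : a * (w * (g * z)) = g * (a * (w * z)) by rewrite !mulrA h3.
have R2 z : g * (a * (w * (a * (w * z)))) = a * (w * z)
  by rewrite -R1 !mulrA h1.
have R3 z : g * (g * (a * (w * z))) = g * z
  by rewrite -R1 !mulrA h2.
have R1e := R1 1; have R2e := R2 1; have R3e := R3 1; rewrite !mulr1 in R1e R2e R3e.
split; last exists 2%N; rewrite ?exprS ?expr0 ?mulr1 -?mulrA;
  by do ?rewrite ?R1 ?R2 ?R3 ?R1e ?R2e ?R3e.
Qed.


Lemma fwd (star : R -> R) (Hs : is_involution star) (w a x : R) :
  is_wcore_inverse star w a x ->
  is_group_inverse (a * w) (x * w * x * w * a * w) /\
  is_bc_inverse (w * a * w) (x * w * x * w * a * w)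
     (star (w * (x * w * x * w * a * w) * (x * w * x * w * a * w) * a)) x.
Proof.
case: Hs => sD sM sK.
case=> h1 h2 h3; rewrite !expr2 !mulrA in h1 h3.
have T1 z : a * (w * (x * (w * (x * z)))) = x * z by rewrite !mulrA h1.
have T2 z : x * (w * (a * (w * (a * (w * z))))) = a * (w * z) by rewrite !mulrA h3.
have T3 z : a * (w * (x * (w * (a * (w * z))))) = a * (w * z)
  by rewrite -[X in x * (w * X)]T2 T1 T2.
have T4 z : x * (w * (a * (w * (x * z)))) = x * z
  by rewrite -[X in a * (w * X)]T1 T2 T1.
have T1e := T1 1; have T2e := T2 1; have T3e := T3 1; have T4e := T4 1.
rewrite !mulr1 in T1e T2e T3e T4e.
split.
  by split; rewrite -!mulrA; do ?rewrite ?T1 ?T2 ?T3 ?T4 ?T1e ?T2e ?T3e ?T4e.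
split.
- by rewrite -!mulrA; do ?rewrite ?T1 ?T2 ?T3 ?T4 ?T1e ?T2e ?T3e ?T4e.
- apply: (can_inj sK); rewrite sK -(mulrA _ _ x) sM.
  rewrite -!mulrA in h2 *; rewrite h2.
  by rewrite sK -!mulrA; do ?rewrite ?T1 ?T2 ?T3 ?T4 ?T1e ?T2e ?T3e ?T4e.
- exists (a * w * (a * w) * (x * w)).
  by rewrite -!mulrA; do ?rewrite ?T1 ?T2 ?T3 ?T4 ?T1e ?T2e ?T3e ?T4e.
- exists (star (w * a * w * a * w * x)).
  rewrite -mulrA -sM.
  have -> : w * (x * w * x * w * a * w) * (x * w * x * w * a * w) * a *
     (w * a * w * a * w * x) = w * a * w * x.
    by rewrite -!mulrA; do ?rewrite ?T1 ?T2 ?T3 ?T4 ?T1e ?T2e ?T3e ?T4e.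
  rewrite h2.
  by rewrite -!mulrA; do ?rewrite ?T1 ?T2 ?T3 ?T4 ?T1e ?T2e ?T3e ?T4e.
Qed.


Lemma bwd (star : R -> R) (Hs : is_involution star) (w a g y : R) :
  is_group_inverse (a * w) g ->
  is_bc_inverse (w * a * w) g (star (w * g * g * a)) y ->
  is_wcore_inverse star w a y.
Proof.
case: Hs => sD sM sK.
case=> h1 h2 h3; rewrite !mulrA in h1 h2 h3.
have R1 z : a * (w * (g * z)) = g * (a * (w * z)) by rewrite !mulrA h3.
have R2 z : g * (a * (w * (a * (w * z)))) = a * (w * z)
  by rewrite -R1 !mulrA h1.
have R3 z : g * (g * (a * (w * z))) = g * z
  by rewrite -R1 !mulrA h2.
have R2e := R2 1; rewrite !mulr1 in R2e.
have G z : a * (w * (g * (g * z))) = g * z by rewrite R1 R1 R3.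
case=> b1 b2 [s hs] [u hu]; rewrite !mulrA in b1.
have B1 z : y * (w * (a * (w * (g * z)))) = g * z by rewrite !mulrA b1.
have D1 : y = a * (w * (g * y)) by rewrite {2}hs -!mulrA G !mulrA -hs.
have B2 z : y * (w * (g * z)) = g * (g * z) by rewrite -[in LHS]G B1.
split.
- by rewrite expr2 {2}D1 -!mulrA B1 -D1.
- have hd : w * a * w * y * (w * g * g * a) = w * g * g * a.
    by rewrite -!mulrA B2 G.
  have hs2 := congr1 star b2; rewrite -mulrA sM sK in hs2.
  have hk : w * a * w * y = w * a * w * (y * u) * star (w * g * g * a)
    by rewrite {1}hu !mulrA.
  have hk' := congr1 star hk; rewrite [in RHS]sM sK in hk'.
  have e1 : w * a * w * y * star (w * a * w * y) = star (w * a * w * y)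
    by rewrite {1}hk' mulrA hd -hk'.
  have e2 := congr1 star e1; rewrite sM sK in e2.
  by rewrite -e1 e2.
- by rewrite expr2 -!mulrA -{1}R2e B1 R2e.
Qed.

End S.

Theorem theorem2p7 (R : nzRingType) (star : R -> R)
  (Hstar : is_involution star) (w a : R) :
  ((exists x, is_wcore_inverse star w a x) <->
   (group_invertible (a * w) /\
    exists d1 d2 y, [/\ is_drazin_inverse (a * w) d1,
                        is_drazin_inverse (w * a) d2 &
                        is_bc_inverse (w * a * w) d1 (star d2) y]))
  /\
  (forall x d1 d2 y,
     is_wcore_inverse star w a x ->
     is_drazin_inverse (a * w) d1 ->
     is_drazin_inverse (w * a) d2 ->
     is_bc_inverse (w * a * w) d1 (star d2) y ->
     x = y).
Proof.
split; first split.
- case=> x Hx; have [Hg Hbc] := fwd Hstar Hx.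
  split; first by eexists; exact: Hg.
  do 3 eexists; split; [exact: group_drazin Hg | exact: cline Hg | exact: Hbc].
- case=> [[g Hg] [d1 [d2 [y [Hd1 Hd2 Hbc]]]]].
  have E1 := drazin_unique Hd1 (group_drazin Hg).
  have E2 := drazin_unique Hd2 (cline Hg).
  subst d1 d2; exists y. exact (bwd Hstar Hg Hbc).
- move=> x d1 d2 y Hx Hd1 Hd2 Hbc.
  have [Hg Hbc'] := fwd Hstar Hx.
  have E1 := drazin_unique Hd1 (group_drazin Hg).
  have E2 := drazin_unique Hd2 (cline Hg).
  subst d1 d2; exact: bc_unique Hbc' Hbc.
Qed.
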